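(* The deterministic query complexity of Local Search on the Odd graph satisfies $$D[LS(K(2k+1,k))]\in\Omega\!\left(\frac{1}{k}\binom{2k+1}{k}\right)\quad\text{as } k\to\infty.$$
   Context: The Kneser graph $K(n,k)$ has as vertices the $k$-element subsets of $[n]$, with two vertices adjacent if and only if they are disjoint. Local Search on a finite undirected graph $G=(V,E)$ is as follows. An unknown function $f:V\to\mathbb{R}$ is accessed only through queries: querying $a\in V$ returns $f(a)$, and queries may be adaptive. The algorithm must output a local maximum, i.e. a vertex $a$ with $f(a)\ge f(b)$ for every edge $(a,b)\in E$. $D[LS(G)]$ is the minimum, over deterministic algorithms, of the maximum, over all $f$, of the number of queries used. *)

(* Defs.v *)
From HB Require Import structures.
From mathcomp Require Import all_boot all_order all_algebra.
Set Implicit Arguments. Unset Strict Implicit. Unset Printing Implicit Defensive.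
Import Order.TTheory GRing.Theory Num.Theory.
Local Open Scope ring_scope.

Definition kneser_vertex (n k : nat) : finType := {A : {set 'I_n} | #|A| == k}.

Definition kneser_adj (n k : nat) : rel (kneser_vertex n k) :=
  fun A B => [disjoint val A & val B].

Definition local_max (V : finType) (e : rel V) (R : realFieldType)
  (f : V -> R) (a : V) : Prop :=
  forall b : V, e a b -> f b <= f a.

(** A deterministic adaptive query algorithm: given the history of
    (query, answer) pairs so far, it either queries a new vertex (inl)
    or stops and outputs a vertex (inr). *)
Definition algorithm (V : finType) (R : realFieldType) : Type :=
  seq (V * R) -> V + V.

Fixpoint run (V : finType) (R : realFieldType) (A : algorithm V R)
  (f : V -> R) (t : nat) (h : seq (V * R)) : option V :=
  match A h with
  | inr v => Some v
  | inl u => if t is t'.+1 then run A f t' (rcons h (u, f u)) else None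
  end.

Definition solves_within (V : finType) (e : rel V) (R : realFieldType)
  (A : algorithm V R) (t : nat) : Prop :=
  forall f : V -> R, exists2 v, run A f t [::] = Some v & local_max e f v.

Definition D_LS_ge (V : finType) (e : rel V) (R : realFieldType) (d : rat) : Prop :=
  forall (A : algorithm V R) (t : nat), solves_within e A t -> d <= t%:R.

(* Main.v *)
Require Import Defs.
From HB Require Import structures.
From mathcomp Require Import all_boot all_order all_algebra.
From mathcomp Require Import all_fingroup zify.
Import Order.TTheory GRing.Theory Num.Theory.
Set Implicit Arguments. Unset Strict Implicit. Unset Printing Implicit Defensive.

(* Proof sketch: an adversary argument (the adversary keeps the
   giant component of the unqueried vertices and answers with a potential
   increasing towards it) reduces the lower bound to a vertex-separator bound for
   the Odd graph, proved by averaging canonical paths over all permutations of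
   [2k+1]. *)

Section Graph.
Variables (V : finType) (e : rel V).
Hypothesis esym : symmetric e.
Implicit Types (Q X Y : {set V}) (w x y z u v : V).

Definition step (Q : {set V}) (w : V) (X : {set V}) : {set V} :=
  ([set w] :|: [set y | [exists z in X, e z y]]) :\: Q.

Lemma step_mono Q w : {homo step Q w : X Y / X \subset Y}.
Proof.
move=> X Y XY; apply/subsetP=> y; rewrite !inE => /andP[-> /orP[->//|]] /=.
case/existsP=> z /andP[zX ezy]; apply/orP; right; apply/existsP; exists z.
by rewrite ezy (subsetP XY).
Qed.

Definition comp Q w := fixset (step Q w).
Definition fo Q w := fix_order (step Q w).

Lemma compE Q w : step Q w (comp Q w) = comp Q w.
Proof. exact: fixsetK (step_mono Q w). Qed.

Lemma comp_notQ Q w x : x \in comp Q w -> x \notin Q.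
Proof. by rewrite -compE !inE => /andP[]. Qed.

Lemma comp_self Q w : w \notin Q -> w \in comp Q w.
Proof. by move=> wQ; rewrite -compE !inE wQ eqxx. Qed.

Lemma comp_nb Q w x y : x \in comp Q w -> y \notin Q -> e x y -> y \in comp Q w.
Proof.
move=> xc yQ exy; rewrite -compE !inE yQ /=; apply/orP; right.
by apply/existsP; exists x; rewrite xc exy.
Qed.

Lemma comp_least Q w X : step Q w X \subset X -> comp Q w \subset X.
Proof.
move=> sX; rewrite /comp /fixset; elim: #|V| => [|i IH] /=; first exact: sub0set.
exact: subset_trans (step_mono Q w IH) sX.
Qed.

Lemma comp_trans Q x y z : y \in comp Q x -> z \in comp Q y -> z \in comp Q x.
Proof.
move=> yx; apply/subsetP; apply: comp_least; apply/subsetP=> u.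
rewrite !inE => /andP[uQ /orP[/eqP->//|/existsP[v /andP[vx evu]]]].
exact: comp_nb vx uQ evu.
Qed.

Lemma iter_comp Q x i y : y \in iter i (step Q x) set0 -> y \in comp Q x.
Proof. by apply/subsetP; apply: iter_sub_fix; apply: step_mono. Qed.

Lemma comp_sym Q x y : y \in comp Q x -> x \in comp Q y.
Proof.
move=> H; have := H; rewrite {1}/comp /fixset.
elim: #|V| y H => [|i IH] y yc /=; first by rewrite inE.
rewrite !inE => /andP[yQ /orP[/eqP yx|/existsP[z /andP[zi ezy]]]].
  by rewrite -yx comp_self.
have xz := IH _ (iter_comp zi) zi.
apply: comp_trans xz; apply: comp_nb (comp_self yQ) (comp_notQ (iter_comp zi)) _.
by rewrite esym.
Qed.

Lemma comp_monoQ Q Q' x : Q \subset Q' -> comp Q' x \subset comp Q x.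
Proof.
move=> QQ'; apply: comp_least; apply/subsetP=> u.
rewrite !inE => /andP[uQ' /orP[/eqP ux|/existsP[v /andP[vx evu]]]].
  rewrite ux; apply: comp_self; rewrite -ux; apply: contra uQ'; exact: (subsetP QQ').
have uQ : u \notin Q by apply: contra uQ'; exact: (subsetP QQ').
exact: comp_nb vx uQ evu.
Qed.

Lemma comp_path Q x p : path e x p -> all (fun v => v \notin Q) (x :: p) ->
  last x p \in comp Q x.
Proof.
elim: p x => [|y p IH] x /=; first by rewrite andbT => xQ; exact: comp_self.
case/andP=> exy pp /and3P[xQ yQ ap].
have yx : y \in comp Q x by apply: comp_nb (comp_self xQ) yQ exy.
apply: comp_trans yx _; apply: IH => //=; by rewrite yQ.
Qed.

Lemma fo_gt0 Q w x : (0 < fo Q w x) = (x \in comp Q w).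
Proof. exact: fix_order_gt0. Qed.

Lemma fo_le Q w x : fo Q w x <= #|V|.
Proof. exact: fix_order_le_max. Qed.

Lemma fo1 Q w x : fo Q w x = 1 -> x = w.
Proof.
move=> h; have : x \in iter 1 (step Q w) set0.
  by rewrite (in_iter_fixE (step_mono Q w)) -/(fo Q w x) h.
by rewrite /= !inE => /andP[_ /orP[/eqP//|/existsP[z]]]; rewrite inE.
Qed.

Lemma fo_descent Q w x m : fo Q w x = m.+2 ->
  exists2 z, e z x & 0 < fo Q w z <= m.+1.
Proof.
move=> h; have : x \in iter m.+2 (step Q w) set0.
  by rewrite (in_iter_fixE (step_mono Q w)) -/(fo Q w x) h leqnn.
rewrite iterS inE => /andP[xQ]; rewrite !inE.
case/orP=> [/eqP xw|/existsP[z /andP[zi ezx]]].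
  have : x \in iter 1 (step Q w) set0 by rewrite /= !inE xw eqxx -xw xQ.
  by rewrite (in_iter_fixE (step_mono Q w)) -/(fo Q w x) h.
exists z => //; by rewrite -/(fo Q w z) -(in_iter_fixE (step_mono Q w)).
Qed.

Lemma reach Q w y : w \notin Q -> y \in comp Q w -> y != w ->
  exists2 u, e w u & u \in comp (Q :|: [set w]) y.
Proof.
move=> wQ; move: {2}(fo Q w y) (leqnn (fo Q w y)) => m.
elim: m y => [|m IH] y hm yc yw.
  by move: hm; rewrite leqn0 => /eqP h; move: yc; rewrite -fo_gt0 h.
have yQ : y \notin Q by exact: comp_notQ yc.
have yQ' : y \notin Q :|: [set w] by rewrite !inE negb_or yQ.
have := fo_gt0 Q w y; rewrite yc.
case e1 : (fo Q w y) => [//|[|m']] _.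
  by move: (fo1 e1) yw => ->; rewrite eqxx.
have [z ezy /andP[z0 zm]] := fo_descent e1.
have [zw|zw] := eqVneq z w.
  by exists y; [rewrite -zw | exact: comp_self].
have zc : z \in comp Q w by rewrite -fo_gt0.
have zQ' : z \notin Q :|: [set w] by rewrite !inE negb_or zw (comp_notQ zc).
have [|u ewu uz] := IH z _ zc zw.
  by rewrite -ltnS; apply: leq_trans hm; rewrite e1 ltnS.
exists u => //; apply: comp_trans uz.
by apply: comp_nb (comp_self yQ') zQ' _; rewrite esym.
Qed.

Definition bigC Q := [set x | (x \notin Q) && (#|V| < 2 * #|comp Q x|)].

Lemma bigC_notQ Q x : x \in bigC Q -> x \notin Q.
Proof. by rewrite inE => /andP[]. Qed.

Lemma bigC_mono Q Q' : Q \subset Q' -> bigC Q' \subset bigC Q.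
Proof.
move=> QQ'; apply/subsetP=> x; rewrite !inE => /andP[xQ' big].
rewrite (contra _ xQ') /=; last exact: (subsetP QQ').
apply: leq_trans big _; rewrite leq_mul2l subset_leq_card //.
exact: comp_monoQ.
Qed.

Lemma bigC_conn Q x y : x \in bigC Q -> y \in bigC Q -> y \in comp Q x.
Proof.
rewrite !inE => /andP[_ bx] /andP[_ bY].
have : 0 < #|comp Q x :&: comp Q y|.
  have := cardsUI (comp Q x) (comp Q y); have := max_card (comp Q x :|: comp Q y).
  lia.
rewrite card_gt0 => /set0Pn[z]; rewrite inE => /andP[zx zy].
exact: comp_trans zx (comp_sym zy).
Qed.

Lemma comp_eq Q x y : y \in comp Q x -> comp Q y = comp Q x.
Proof.
move=> yx; apply/eqP; rewrite eqEsubset; apply/andP; split; apply/subsetP=> z.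
  exact: comp_trans yx.
exact: comp_trans (comp_sym yx).
Qed.

Lemma bigC_comp Q x y : x \in bigC Q -> y \in comp Q x -> y \in bigC Q.
Proof.
move=> xb yx; move: xb; rewrite !inE (comp_eq yx) => /andP[_ ->].
by rewrite (comp_notQ yx).
Qed.

Lemma bigC_add Q x w : x \in bigC Q -> w \notin bigC Q ->
  x \in bigC (Q :|: [set w]).
Proof.
move=> xb wb.
have wx : w \notin comp Q x by apply: contra wb; exact: bigC_comp.
have xQ := bigC_notQ xb.
have xw : x != w by apply: contraNneq wx => <-; rewrite comp_self.
have sub : comp Q x \subset comp (Q :|: [set w]) x.
  apply: comp_least; apply/subsetP=> u.
  rewrite !inE => /andP[uQ /orP[/eqP ux|/existsP[v /andP[vx evu]]]].
    by rewrite ux; apply: comp_self; rewrite !inE negb_or xQ xw.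
  have vx' : v \in comp Q x by apply: (subsetP (comp_monoQ _ _)) vx; exact: subsetUl.
  have ux : u \in comp Q x by exact: comp_nb vx' uQ evu.
  apply: comp_nb vx _ evu; rewrite !inE negb_or uQ /=.
  by apply: contraNneq wx => <-.
rewrite inE !inE negb_or xQ xw /=; move: xb; rewrite inE => /andP[_ big].
apply: leq_trans big _; rewrite leq_mul2l subset_leq_card //; exact: orbT.
Qed.

Definition M := #|V|.+3.
Definition Qs (s : seq V) : {set V} := [set x in s].
Definition Cp s i := bigC (Qs (take i s)).
Definition Lt s v := find (fun i => v \notin Cp s i) (iota 0 (size s).+1).
Definition Fv s v := let l := Lt s v in
  if size s < l then (size s).+1 * M
  else l * M - fo (Qs (take l.-1 s)) (nth v s l.-1) v.

Lemma Cp_mono s i j : i <= j -> Cp s j \subset Cp s i.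
Proof.
move=> ij; apply: bigC_mono; apply/subsetP=> x; rewrite !inE.
by rewrite -(take_takel s ij); apply: mem_take.
Qed.

Lemma Lt_in s v i : i <= size s -> (v \in Cp s i) = (i < Lt s v).
Proof.
move=> iS; case: ltnP => h.
  have := before_find 0 h; rewrite nth_iota ?ltnS // add0n.
  by move/negbFE.
have hf : Lt s v < size (iota 0 (size s).+1) by rewrite size_iota ltnS (leq_trans h).
have hs : has (fun i => v \notin Cp s i) (iota 0 (size s).+1) by rewrite has_find.
have := nth_find 0 hs; rewrite -/(Lt s v) nth_iota ?add0n => [vn|]; last by move: hf; rewrite size_iota.
by apply/negbTE; apply: contra vn; apply/subsetP/Cp_mono.
Qed.

Lemma Lt_le s v : Lt s v <= (size s).+1.
Proof. by have := find_size (fun i => v \notin Cp s i) (iota 0 (size s).+1); rewrite size_iota. Qed.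

Lemma Lt_eq s v l : l <= size s -> v \notin Cp s l ->
  (forall i, i < l -> v \in Cp s i) -> Lt s v = l.
Proof.
move=> lS vl hi; case: (ltngtP (Lt s v) l) => // h.
  have := hi _ h; rewrite Lt_in ?ltnn //; exact: leq_trans (ltnW h) lS.
by move: vl; rewrite Lt_in // h.
Qed.

Lemma Cp_take s j i : i <= j -> Cp (take j s) i = Cp s i.
Proof. by move=> ij; rewrite /Cp take_takel. Qed.

Lemma Fv_take s j v : j <= size s -> v \notin Cp s j -> Fv (take j s) v = Fv s v.
Proof.
move=> jS vj.
have lj : Lt s v <= j by move: vj; rewrite Lt_in // -leqNgt.
have sz : size (take j s) = j by rewrite size_takel.
have E : Lt (take j s) v = Lt s v.
  apply: Lt_eq; first by rewrite sz.
    rewrite Cp_take // Lt_in ?ltnn //; exact: leq_trans lj jS.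
  move=> i il; rewrite Cp_take; last exact: leq_trans (ltnW il) lj.
  rewrite Lt_in //; exact: leq_trans (ltnW il) (leq_trans lj jS).
rewrite /Fv E sz ltnNge lj /= ltnNge (leq_trans lj jS) /=.
case l0: (Lt s v) => [|l]; first by rewrite !mul0n.
have lj' : l < j by rewrite -ltnS -l0.
rewrite -pred_Sn take_takel ?nth_take //; exact: ltnW.
Qed.

Lemma Fv_lb s v i : i <= size s -> v \in Cp s i -> i.+1 * M - #|V| <= Fv s v.
Proof.
move=> iS; rewrite Lt_in // => il; rewrite /Fv.
case: ifP => h.
  by apply: leq_trans (leq_subr _ _) _; rewrite leq_mul2r ltnS iS orbT.
apply: leq_sub; first by rewrite leq_mul2r il orbT.
exact: fo_le.
Qed.

Lemma Fv_ub s v : v \notin Cp s (size s) -> Fv s v <= size s * M.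
Proof.
rewrite Lt_in // -leqNgt => h; rewrite /Fv ltnNge h /=.
by apply: leq_trans (leq_subr _ _) _; rewrite leq_mul2r h orbT.
Qed.

Lemma Fv_pos (C0 : forall v, v \in bigC set0) s v : 0 < Fv s v.
Proof.
have l1 : 0 < Lt s v.
  by rewrite -Lt_in // /Cp take0; have -> : Qs [::] = set0 by apply/setP=> x; rewrite !inE.
rewrite /Fv; case: ifP => // _; have := fo_le (Qs (take (Lt s v).-1 s)) (nth v s (Lt s v).-1) v.
rewrite /M; nia.
Qed.

Lemma Qs_rcons t w : Qs (rcons t w) = Qs t :|: [set w].
Proof. by apply/setP=> x; rewrite !inE mem_rcons in_cons orbC. Qed.

Lemma key (C0 : forall v, v \in bigC set0) s a :
  (exists c, c \in Cp s (size s)) -> a \notin Cp s (size s) ->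
  exists2 b, e a b & Fv s a < Fv s b.
Proof.
move=> [c cT] aT.
set T := size s; set l := Lt s a.
have lT : l <= T by move: aT; rewrite Lt_in // -leqNgt.
have l1 : 0 < l.
  by rewrite -Lt_in // /Cp take0; have -> : Qs [::] = set0 by apply/setP=> x; rewrite !inE.
set w := nth a s l.-1; set Q := Qs (take l.-1 s).
have lS : l.-1 < size s by rewrite prednK.
have Q'E : Qs (take l s) = Q :|: [set w] by rewrite -(prednK l1) (take_nth a lS) Qs_rcons.
have al1 : a \in bigC Q by rewrite -/(Cp s l.-1) Lt_in ?prednK // ltnW.
have al : a \notin bigC (Q :|: [set w]) by rewrite -Q'E -/(Cp s l) Lt_in // ltnn.
have wb : w \in bigC Q by apply: contraT => wn; move: al; rewrite bigC_add.
have wQ := bigC_notQ wb.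
have Fa : Fv s a = l * M - fo Q w a by rewrite /Fv -/l ltnNge lT.
have help : forall u, u \in bigC Q ->
    l.+1 * M - #|V| <= Fv s u \/ Fv s u = l * M - fo Q w u.
  move=> u ub; case: (boolP (u \in Cp s l)) => ul.
    by left; apply: Fv_lb.
  right; have Lu : Lt s u = l.
    apply: Lt_eq => // i il; apply: (subsetP (Cp_mono s _)) ub.
    by rewrite -ltnS prednK.
  by rewrite /Fv Lu ltnNge lT /= (set_nth_default a).
have fa := fo_le Q w a.
have [aw|aw] := eqVneq a w.
  have cl : c \in Cp s l by apply: (subsetP (Cp_mono s lT)) cT.
  have cb : c \in bigC Q by apply: (subsetP (bigC_mono (subsetUl Q [set w]))); rewrite -Q'E.
  have cw : c \in comp Q w by apply: bigC_conn.
  have cnw : c != w.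
    by apply: contraTneq (bigC_notQ cl) => ->; rewrite /Cp Q'E !inE eqxx orbT.
  have [u ewu uc] := reach wQ cw cnw.
  have ub' : u \in bigC (Q :|: [set w]).
    by apply: bigC_comp uc; rewrite -Q'E.
  exists u; first by rewrite aw.
  have := Fv_lb lT (_ : u \in Cp s l); rewrite /Cp Q'E => /(_ ub').
  rewrite Fa /M; nia.
have ac : a \in comp Q w by apply: bigC_conn.
have := fo_gt0 Q w a; rewrite ac.
case e1 : (fo Q w a) => [//|[|m]] _.
  by move: (fo1 e1) aw => ->; rewrite eqxx.
have [z eza /andP[z0 zm]] := fo_descent e1.
have zc : z \in comp Q w by rewrite -fo_gt0.
have zb : z \in bigC Q by apply: bigC_comp zc.
exists z; first by rewrite esym.
have fz := fo_le Q w z.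
rewrite Fa; case: (help z zb) => [h|->]; [move: h; rewrite /M =>h|rewrite /M]; nia.
Qed.
End Graph.


Section Run.
Local Open Scope ring_scope.
Variables (V : finType) (e : rel V) (R : realFieldType) (A : algorithm V R).
Hypothesis esym : symmetric e.

Fixpoint arun t (h : seq (V * R)) (s : seq V) : seq V * option V :=
  match A h with
  | inr v => (s, Some v)
  | inl u => if t is t'.+1 then
       arun t' (rcons h (u, ((Fv e (rcons s u) u)%:R : R))) (rcons s u)
     else (s, None)
  end.

Lemma arun_spec t h s S o : arun t h s = (S, o) ->
  [/\ s = take (size s) S, (size S <= size s + t)%N &
   forall f : V -> R, (forall i x0, (size s <= i < size S)%N ->
       f (nth x0 S i) = (Fv e (take i.+1 S) (nth x0 S i))%:R) ->
     run A f t h = o].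
Proof.
elim: t h s => [|t IH] h s /=; case Ah: (A h) => [u|v].
- case=> <- <-; rewrite take_size addn0; split=> // f _; by rewrite /= Ah.
- case=> <- <-; rewrite take_size addn0; split=> // f _; by rewrite /= Ah.
- move=> /IH [h1 h2 h3].
  have szS : (size s < size S)%N.
    have := size_take (size (rcons s u)) S; rewrite -h1 size_rcons.
    by case: ifP => [hh _|_ <-]; [exact: ltnW | exact: ltnSn].
  have hs : s = take (size s) S.
    by rewrite -(take_takel S (leqnSn (size s))) -[(size s).+1](size_rcons s u) -h1 -cats1 takel_cat // take_size.
  have nu : forall x0, nth x0 S (size s) = u.
    move=> x0; rewrite -(nth_take x0 (ltnSn (size s))) -[(size s).+1](size_rcons s u) -h1.
    by rewrite nth_rcons ltnn eqxx.
  split => //; first by move: h2; rewrite size_rcons addSnnS.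
  move=> f hf /=.
  have -> : f u = (Fv e (rcons s u) u)%:R.
    have := hf (size s) u; rewrite leqnn szS nu => /(_ isT) ->.
    by rewrite [in RHS]h1 size_rcons.
  apply: h3 => i x0 /andP[hi1 hi2]; apply: hf.
  by rewrite hi2 andbT; move: hi1; rewrite size_rcons; apply: ltnW.
- case=> <- <-; rewrite take_size; split=> //; first by rewrite leq_addr.
Qed.

Lemma no_solve t (C0 : forall v, v \in bigC e set0)
  (nb : forall a, exists2 b, b != a & e a b)
  (Cne : forall Q : {set V}, (#|Q| <= t)%N -> exists c, c \in bigC e Q) :
  ~ solves_within e A t.
Proof.
move=> sol.
case E: (arun t [::] [::]) => [S o].
have [_ szS spec] := arun_spec E; rewrite /= add0n in szS.
have [c cT] : exists c, c \in Cp e S (size S).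
  apply: Cne; apply: leq_trans szS.
  rewrite /Cp take_size /Qs; apply: leq_trans (card_size S); rewrite cardsE.
  exact: leqnn.
have notC : forall i x0, (i < size S)%N -> nth x0 S i \notin Cp e S (size S).
  move=> i x0 iS; apply/negP => /bigC_notQ.
  by rewrite take_size /Qs inE mem_nth.
have spec' : forall f : V -> R, (forall i x0, (i < size S)%N ->
    f (nth x0 S i) = (Fv e S (nth x0 S i))%:R) -> run A f t [::] = o.
  move=> f hf; apply: spec => i x0 /andP[_ iS]; rewrite hf //.
  rewrite Fv_take //.
  rewrite /Cp (take_nth x0 iS) Qs_rcons; apply/negP => /bigC_notQ.
  by rewrite !inE eqxx orbT.
clear spec; case: o E spec' => [a|] E spec'; last first.
  have [v] := sol (fun v => (Fv e S v)%:R).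
  by rewrite (spec' _ (fun i x0 _ => erefl)).
pose f := fun v => if (v == a) && (a \in Cp e S (size S)) then 0 else ((Fv e S v)%:R : R).
have [v] := sol f; rewrite spec'; last first.
  move=> i x0 iS; rewrite /f; case: ifP => // /andP[/eqP <-].
  by rewrite (negbTE (notC _ _ iS)).
case=> <-; rewrite /local_max.
case: (boolP (a \in Cp e S (size S))) => aC.
  have [b ba eab] := nb a => /(_ b eab).
  rewrite /f eqxx aC (negbTE ba) /= lern0 eqn0Ngt.
  by rewrite Fv_pos.
have [b eab lt] := key esym C0 (ex_intro _ c cT) aC => /(_ b eab).
have ba : b != a by apply: contraTneq lt => ->; rewrite ltnn.
by rewrite /f (negbTE ba) eqxx (negbTE aC) /= ler_nat leqNgt lt.
Qed.
End Run.



Lemma perm_trans_set (T : finType) (X Y : {set T}) : #|X| = #|Y| ->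
  exists s : {perm T}, [set s x | x in X] = Y.
Proof.
move: {2}#|X :\: Y| (leqnn #|X :\: Y|) => m.
elim: m X => [|m IH] X hm hc.
  exists 1%g; rewrite imset_perm1; apply/eqP; rewrite eqEcard hc leqnn andbT.
  by rewrite -setD_eq0 -cards_eq0 -leqn0.
have [/eqP h|] := eqVneq (X :\: Y) set0.
  exists 1%g; rewrite imset_perm1; apply/eqP; rewrite eqEcard hc leqnn andbT.
  by rewrite -setD_eq0 h.
case/set0Pn => a; rewrite inE => /andP[ay ax].
have : Y :\: X != set0.
  apply/negP; rewrite setD_eq0 => yx.
  have E : Y = X by apply/eqP; rewrite eqEcard yx hc leqnn.
  by move: ay; rewrite E ax.
case/set0Pn => b; rewrite inE => /andP[bx bY].
set t := tperm a b.
have hc' : #|[set t x | x in X]| = #|Y| by rewrite card_imset //; exact: perm_inj.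
have dec : #|[set t x | x in X] :\: Y| < #|X :\: Y|.
  rewrite (cardsD1 a (X :\: Y)) !inE ay ax /= add1n ltnS.
  apply: subset_leq_card; apply/subsetP=> z; rewrite !inE.
  case/andP=> zy /imsetP[x xX zx]; move: zy; rewrite zx.
  rewrite /t; case: tpermP => [xa|xb|xa xb] zy.
  - by move: zy; rewrite bY.
  - by move: bx; rewrite -xb xX.
  - by apply/and3P; split => //; apply/eqP.
have [s' hs'] := IH _ (leq_trans dec hm) hc'.
exists (t * s')%g; rewrite -hs' -imset_comp; apply: eq_imset => x.
by rewrite permM.
Qed.

Lemma arith1 N a u q c i : a + u = N -> 2 * c <= N -> a = q + c - i -> N - 2 * q <= 2 * u.
Proof. lia. Qed.

Lemma arith2 N q m k : 0 < k -> 16 * k * q < N -> (N - q) * (N - 2 * q) <= 2 * m -> m <= N * (2 * k + 1) * q -> False.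
Proof.
move=> k1 h1 h2 h3.
have hq : 16 * q < N by nia.
nia.
Qed.

Section Odd.
Variable k : nat.
Local Notation n := (2 * k + 1).
Local Notation V := (kneser_vertex n k).
Local Notation e := (@kneser_adj n k).

Lemma card_vert (x : V) : #|val x| = k.
Proof. by apply/eqP; exact: (valP x). Qed.

Lemma kesym : symmetric e.
Proof. by move=> x y; rewrite /kneser_adj disjoint_sym. Qed.

Definition mkv (X : {set 'I_n}) (h : #|X| = k) : V := exist _ X (introT eqP h).

Lemma cardC (X : {set 'I_n}) : #|~: X| = n - #|X|.
Proof. by have := cardsC X; rewrite card_ord; lia. Qed.

Lemma kpath (x y : V) : exists2 p, path e x p && (last x p == y) & size p <= 2 * k.
Proof.
suff H : forall m (x : V), #|val x :\: val y| <= m ->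
    exists2 p, path e x p && (last x p == y) & size p <= 2 * #|val x :\: val y|.
  have [p h1 h2] := H _ x (leqnn _); exists p => //; apply: leq_trans h2 _.
  by rewrite leq_mul2l (leq_trans (subset_leq_card (subsetDl _ _))) ?card_vert ?orbT.
elim=> [|m IH] x0 hm.
  have E : val x0 = val y.
    apply/eqP; rewrite eqEcard card_vert card_vert leqnn andbT.
    by rewrite -setD_eq0 -cards_eq0 -leqn0.
  by exists [::]; rewrite //= (val_inj E) eqxx.
have [/eqP|] := eqVneq (val x0 :\: val y) set0.
  move=> h; exists [::]; last by [].
  have E : val x0 = val y.
    apply/eqP; rewrite eqEcard card_vert card_vert leqnn andbT.
    by rewrite -setD_eq0 h.
  by rewrite /= (val_inj E) eqxx.
case/set0Pn => a; rewrite inE => /andP[ay ax].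
have : val y :\: val x0 != set0.
  apply/negP; rewrite setD_eq0 => yx.
  have : val y = val x0 by apply/eqP; rewrite eqEcard yx !card_vert leqnn.
  by move=> E; move: ay; rewrite E ax.
case/set0Pn => b; rewrite inE => /andP[bx bY].
set X := val x0.
have hX : #|(X :\ a) :|: [set b]| = k.
  rewrite setUC cardsU1 !inE negb_and bx orbT /=.
  have h := cardsD1 a X; rewrite ax /= in h; exact: etrans (esym h) (card_vert x0).
set x' := mkv hX.
have hM : #|~: (X :|: [set b])| = k.
  by rewrite cardC setUC cardsU1 bx card_vert; lia.
set mid := mkv hM.
have e1 : e x0 mid.
  by rewrite /kneser_adj /= disjoints_subset setCK subsetUl.
have e2 : e mid x'.
  rewrite /kneser_adj /= disjoint_sym disjoints_subset setCK.
  by apply: setSU; apply: subsetDl.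
have dec : #|val x' :\: val y| < #|X :\: val y|.
  rewrite /= (cardsD1 a (X :\: val y)) !inE ay ax /= add1n ltnS.
  apply: subset_leq_card; apply/subsetP=> z; rewrite !inE.
  case/andP=> zy /orP[/andP[za zx]|/eqP zb]; first by rewrite za zy zx.
  by move: zy; rewrite zb bY.
have [p h1 h2] := IH x' (leq_trans (leq_trans dec hm) (leqnn _)).
exists [:: mid, x' & p]; first by rewrite /= e1 e2.
apply: (leq_trans (n := (2 * #|val x' :\: val y|).+2)); first by rewrite /= !ltnS.
by rewrite -addn2 -mulnSr leq_mul2l dec orbT.
Qed.

Lemma knb (k1 : 0 < k) (a : V) : exists2 b, b != a & e a b.
Proof.
have : 0 < #|~: val a| by rewrite cardC card_vert; lia.
rewrite card_gt0 => /set0Pn[c cA].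
have hb : #|~: val a :\ c| = k.
  have := cardsD1 c (~: val a); rewrite cA cardC card_vert /=; lia.
exists (mkv hb).
  apply/eqP=> E; have : 0 < #|val a| by rewrite card_vert.
  rewrite card_gt0 => /set0Pn[z za].
  by have := za; rewrite -{1}E /= !inE za andbF.
by rewrite /kneser_adj /= disjoint_sym disjoints_subset subsetDl.
Qed.

Lemma kcomp0 (v : V) : comp e set0 v = setT.
Proof.
apply/setP=> y; rewrite inE.
have [p /andP[pp /eqP <-] _] := kpath v y.
by apply: comp_path => //; apply/allP=> z _; rewrite inE.
Qed.

Lemma kC0 (v : V) : v \in bigC e set0.
Proof.
rewrite inE inE /= kcomp0 cardsT.
have h : 0 < #|V| by apply/card_gt0P; exists v.
change (#|V| < 2 * #|V|); lia.
Qed.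

Local Notation P := {perm 'I_n}.
Implicit Types (Q : {set V}) (x y v w : V).

Lemma card_act (p : P) (x : V) : #|[set p i | i in val x]| = k.
Proof. by rewrite card_imset ?card_vert //; exact: perm_inj. Qed.

Definition act (p : P) (x : V) : V := mkv (card_act p x).

Lemma act_adj p x y : e (act p x) (act p y) = e x y.
Proof.
rewrite /kneser_adj /= -!setI_eq0 -imsetI ?imset_eq0 //.
by move=> i j _ _; exact: perm_inj.
Qed.

Lemma act_inj p : injective (act p).
Proof.
move=> x y /(congr1 val) /= h; apply: val_inj.
exact: (imset_inj (@perm_inj _ p)).
Qed.

Lemma act_mul p q x : act (p * q)%g x = act q (act p x).
Proof.
apply: val_inj => /=; rewrite -imset_comp; apply: eq_imset => i.
by rewrite permM.
Qed.

Lemma act_trans x y : exists p, act p x = y.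
Proof.
have [p hp] := perm_trans_set (etrans (card_vert x) (esym (card_vert y))).
by exists p; apply: val_inj.
Qed.

Lemma act_path p x s : path e (act p x) (map (act p) s) = path e x s.
Proof. by elim: s x => //= y s IH x; rewrite act_adj IH. Qed.

Definition gcount (Q : {set V}) v := \sum_(p : P) (act p v \in Q).

Lemma gcount_const Q v w : gcount Q w = gcount Q v.
Proof.
have [s hs] := act_trans v w.
rewrite /gcount [RHS](reindex_inj (mulgI s)) /=; apply: eq_bigr => p _.
by rewrite act_mul hs.
Qed.

Lemma sum_mem (Q : {set V}) : \sum_(v : V) (v \in Q) = #|Q|.
Proof.
rewrite -sum1_card [RHS]big_mkcond /=; apply: eq_bigr => v _.
by case: (v \in Q).
Qed.

Lemma gcount_sum Q : \sum_(v : V) gcount Q v = #|P| * #|Q|.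
Proof.
rewrite /gcount exchange_big /=.
rewrite (eq_bigr (fun _ => #|Q|)); first by rewrite sum_nat_const.
move=> p _; rewrite -[RHS]sum_mem [RHS](reindex_inj (@act_inj p)) //.
Qed.

Lemma sum_const_V (c : nat) : \sum_(v : V) c = #|V| * c.
Proof. by rewrite sum_nat_const cardT -cardE. Qed.

Lemma sum_const_P (c : nat) : \sum_(p : P) c = #|P| * c.
Proof. by rewrite sum_nat_const cardT -cardE. Qed.

Lemma gcount_N Q v : #|V| * gcount Q v = #|P| * #|Q|.
Proof.
rewrite -gcount_sum -sum_const_V; apply: eq_bigr => w _; exact: gcount_const.
Qed.

Lemma count_sum Q s v0 :
  \sum_(p : P) count (fun v => act p v \in Q) s = size s * gcount Q v0.
Proof.
elim: s => [|x s IH] /=; first by rewrite big1.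
rewrite big_split /= IH (mulSn (size s)); congr (_ + _).
by rewrite -(gcount_const Q v0 x).
Qed.

Lemma pth_ex (x y : V) :
  exists p, (path e x p && (last x p == y)) && (size p <= 2 * k).
Proof. by have [p h1 h2] := kpath x y; exists p; rewrite h1 h2. Qed.

Definition pth x y := xchoose (pth_ex x y).

Lemma pthP x y : [/\ path e x (pth x y), last x (pth x y) = y & size (pth x y) <= 2 * k].
Proof. by have /andP[/andP[h1 /eqP h2] h3] := xchooseP (pth_ex x y). Qed.

Definition bad Q x y := (x \notin Q) && (y \notin Q) && (y \notin comp e Q x).

Lemma bad_le Q p x y :
  bad Q (act p x) (act p y) <= count (fun v => act p v \in Q) (x :: pth x y).
Proof.
case h: (has (fun v => act p v \in Q) (x :: pth x y)).
  by move: h; rewrite has_count; case: (bad _ _ _).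
have [h1 h2 _] := pthP x y.
have : act p y \in comp e Q (act p x).
  rewrite -h2 -last_map; apply: comp_path; first by rewrite act_path.
  rewrite -(map_cons (act p)) all_map; apply/allP=> v vs /=.
  by apply: contraFN h => vQ; apply/hasP; exists v.
by rewrite /bad => ->; rewrite !andbF.
Qed.

Definition Npairs Q := \sum_(x : V) \sum_(y : V) bad Q x y.

Lemma Npairs_act Q p : Npairs Q = \sum_(x : V) \sum_(y : V) bad Q (act p x) (act p y).
Proof.
rewrite /Npairs (reindex_inj (@act_inj p)); apply: eq_bigr => x _.
by rewrite (reindex_inj (@act_inj p)).
Qed.

Lemma Npairs_ub Q : Npairs Q <= #|V| * (2 * k + 1) * #|Q|.
Proof.
have P0 : 0 < #|P| by apply/card_gt0P; exists 1%g.
rewrite -(leq_pmul2l P0).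
rewrite -sum_const_P.
apply: (@leq_trans (\sum_(p : P) \sum_(x : V) \sum_(y : V)
            count (fun v => act p v \in Q) (x :: pth x y))).
  apply: leq_sum => p _; rewrite (Npairs_act Q p).
  apply: leq_sum => x _; apply: leq_sum => y _; exact: bad_le.
rewrite exchange_big /=.
apply: (@leq_trans (\sum_(x : V) \sum_(y : V) (2 * k + 1) * gcount Q x)).
  apply: leq_sum => x _; rewrite exchange_big /=; apply: leq_sum => y _.
  have := count_sum Q (x :: pth x y) x; rewrite /= => ->; rewrite leq_mul2r; apply/orP; right.
  by have [_ _ h3] := pthP x y; rewrite -[(size (pth x y)).+1]addn1 leq_add2r.
rewrite (eq_bigr (fun x => (2 * k + 1) * (#|P| * #|Q|))); last first.
  move=> x _; rewrite sum_const_V mulnCA gcount_N //.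
rewrite sum_const_V; apply: eq_leq; rewrite !mulnA; congr (_ * _).
by rewrite mulnC mulnA.
Qed.

Lemma Npairs_lb Q : (forall x, x \notin bigC e Q) ->
  (#|V| - #|Q|) * (#|V| - 2 * #|Q|) <= 2 * Npairs Q.
Proof.
move=> hnb.
have hx : forall x : V, (x \notin Q) * (#|V| - 2 * #|Q|) <= 2 * \sum_(y : V) bad Q x y.
  move=> x; case: (boolP (x \in Q)) => xQ; first by rewrite mul0n.
  have E : \sum_(y : V) bad Q x y = #|~: (Q :|: comp e Q x)|.
    rewrite -sum_mem; apply: eq_bigr => y _; by rewrite /bad xQ !inE negb_or.
  rewrite E; have hc := cardsC (Q :|: comp e Q x).
  have := hnb x; rewrite inE xQ /= -leqNgt => h2.
  have h4 := cardsU Q (comp e Q x).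
  rewrite mul1n; exact: arith1 hc h2 h4.
apply: (@leq_trans (\sum_(x : V) (x \notin Q) * (#|V| - 2 * #|Q|))).
  rewrite -big_distrl /= leq_mul2r; apply/orP; right.
  have := sum_mem (~: Q); rewrite cardsCs setCK => <-.
  by apply: eq_leq; apply: eq_bigr => x _; rewrite inE.
rewrite /Npairs big_distrr /=; exact: leq_sum => x _.
Qed.

Lemma kCne t (k1 : 0 < k) (ht : 16 * k * t < #|V|) (Q : {set V}) :
  #|Q| <= t -> exists c, c \in bigC e Q.
Proof.
move=> hQ; case: (pickP (mem (bigC e Q))) => [c hc|hn]; first by exists c.
have hn' : forall x, x \notin bigC e Q by move=> x; apply/negbT; exact: (hn x).
have lb := Npairs_lb hn'; have ub := Npairs_ub Q.
have h1 : 16 * k * #|Q| < #|V| by apply: leq_ltn_trans ht; rewrite leq_mul2l hQ orbT.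
by case: (arith2 k1 h1 lb ub).
Qed.
End Odd.

Unset Implicit Arguments.
Local Open Scope ring_scope.

Lemma card_kv k : #|kneser_vertex (2 * k + 1) k| = 'C(2 * k + 1, k).
Proof.
rewrite card_sig; have := card_draws 'I_(2 * k + 1) k; rewrite card_ord => <-.
by apply: eq_card => A; rewrite !inE.
Qed.

Theorem theorem3p5 (R : realFieldType) :
  exists2 c : rat, 0 < c &
  exists K : nat, forall k : nat, (K <= k)%N ->
    D_LS_ge (@kneser_adj (2 * k + 1) k) R
      (c * ('C(2 * k + 1, k)%:R / k%:R)).
Proof.
exists (16%:R^-1); first by rewrite invr_gt0 ltr0n.
exists 1%N => k k1 A t sol.
have hk : (0 : rat) < k%:R by rewrite ltr0n.
have E : 16%:R^-1 * ('C(2 * k + 1, k)%:R / k%:R) = 'C(2 * k + 1, k)%:R / (16 * k)%:R :> rat.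
  by rewrite natrM invfM mulrCA mulrA.
rewrite E ler_pdivrMr ?ltr0n ?muln_gt0 // -natrM ler_nat.
rewrite leqNgt; apply/negP => ht.
apply: (no_solve (@kesym k) (@kC0 k) (@knb k k1) _ sol).
move=> Q hQ; apply: (kCne k1 _ hQ).
by rewrite card_kv mulnC.
Qed.
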